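(* Let ${\cal H}\subset{\cal H}_0$, ${\mathcal D}$, $b$, $\mu_\ell^{-1}$, $\epsilon_\ell$, $a_\ell$, ${\mathcal A}_\ell$ ($\ell=1,2$) be as in the context (in particular, the standing assumptions there hold). Let $({\cal H}_N)_{N=1}^\infty$ be finite-dimensional subspaces of ${\cal H}$, and for each $N$ let $\mathsf{A}_1,\mathsf{A}_2$ be the associated Galerkin matrices and $\mathsf{D}$, $m_\pm$ as in the context. Suppose ${\mathcal A}_1:{\cal H}\to{\cal H}^*$ is invertible and there exists $C_1>0$ such that for all $N\in\mathbb{Z}^+$ $$\inf_{u_N\in {\cal H}_N\setminus\{0\}} \sup_{v_N\in {\cal H}_N\setminus\{0\}} \frac{|a_1(u_N,v_N)|}{\|u_N\|_{{\cal H}}\|v_N\|_{{\cal H}}}\geq \frac{1}{C_1\|{\mathcal A}_1^{-1}\|_{{\cal H}^*\to{\cal H}}}$$ and, for all $v_N\in{\cal H}_N\setminus\{0\}$, $\sup_{u_N\in{\cal H}_N\setminus\{0\}}|a_1(u_N,v_N)|>0$. If $$\Big(\|\mu_1^{-1}-\mu_2^{-1}\|_{{\cal H}_0\to{\cal H}_0}+\|\epsilon_1-\epsilon_2\|_{{\cal H}_0\to{\cal H}_0}\Big)C_1\|{\mathcal A}_1^{-1}\|_{{\cal H}^*\to{\cal H}}\leq \tfrac12,$$ then $\mathsf{A}_2^{-1}$ exists and $$\max\Big\{\|\mathsf{I}-\mathsf{A}_2^{-1}\mathsf{A}_1\|_{\mathsf{D}},\ \|\mathsf{I}-\mathsf{A}_1\mathsf{A}_2^{-1}\|_{\mathsf{D}^{-1}}\Big\}\leq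 2\Big(\|\mu_1^{-1}-\mu_2^{-1}\|_{{\cal H}_0\to{\cal H}_0}+\|\epsilon_1-\epsilon_2\|_{{\cal H}_0\to{\cal H}_0}\Big)C_1\|{\mathcal A}_1^{-1}\|_{{\cal H}^*\to{\cal H}}.$$ Furthermore, if $\mu_1=\mu_2$, then $$\max\Big\{\|\mathsf{I}-\mathsf{A}_2^{-1}\mathsf{A}_1\|_2,\ \|\mathsf{I}-\mathsf{A}_1\mathsf{A}_2^{-1}\|_2\Big\}\leq 2\frac{m_+}{m_-}\|\epsilon_1-\epsilon_2\|_{{\cal H}_0\to{\cal H}_0}C_1\|{\mathcal A}_1^{-1}\|_{{\cal H}^*\to{\cal H}}.$$
   Context: Standing assumptions: ${\cal H}\subset{\cal H}_0$ are complex Hilbert spaces with $\|v\|_{{\cal H}_0}\le\|v\|_{{\cal H}}$ for $v\in{\cal H}$, and ${\cal H}_0$ is identified with its dual so that ${\cal H}\subset{\cal H}_0\subset{\cal H}^*$. ${\mathcal D}:{\cal H}\to{\cal H}_0$ is linear with $\|{\mathcal D}\|_{{\cal H}\to{\cal H}_0}\le 1$; $b(\cdot,\cdot)$ is a continuous sesquilinear form on ${\cal H}$; for $\ell=1,2$, $\mu_\ell^{-1}:{\cal H}_0\to{\cal H}_0$ and $\epsilon_\ell:{\cal H}_0\to{\cal H}_0$ are bounded linear operators, and $a_\ell(u,v):=(\mu_\ell^{-1}{\mathcal D}u,{\mathcal D}v)_{{\cal H}_0}+b(u,v)-(\epsilon_\ell u,v)_{{\cal H}_0}$. For $\ell=1,2$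 there exist $C_{{\rm G1},\ell},C_{{\rm G2},\ell}>0$ with $|a_\ell(v,v)+C_{{\rm G2},\ell}\|v\|_{{\cal H}_0}^2|\ge C_{{\rm G1},\ell}\|v\|_{{\cal H}}^2$ for all $v\in{\cal H}$. ${\mathcal A}_\ell:{\cal H}\to{\cal H}^*$ is defined by $\langle{\mathcal A}_\ell u,v\rangle_{{\cal H}^*\times{\cal H}}=a_\ell(u,v)$. Discrete notation: ${\cal H}_N\subset{\cal H}$ has basis $\{\phi_j\}_{j=1}^N$; $(\mathsf{A}_\ell)_{ij}=a_\ell(\phi_j,\phi_i)$. $\mathsf{D}$ is the Hermitian positive-definite matrix such that, writing $\|\mathbf V\|_{\mathsf D}:=(\mathsf D\mathbf V,\mathbf V)_2^{1/2}$, one has $\|\sum_j V_j\phi_j\|_{{\cal H}}=\|\mathbf V\|_{\mathsf D}$ for all $\mathbf V\in\mathbb{C}^N$; $\|\mathbf V\|_{\mathsf D^{-1}}:=(\mathsf D^{-1}\mathbf V,\mathbf V)_2^{1/2}$; matrix norms $\|\cdot\|_{\mathsf D}$, $\|\cdot\|_{\mathsf D^{-1}}$, $\|\cdot\|_2$ are those induced by the corresponding vector norms ($\|\cdot\|_2$ Euclidean). $m_\pm>0$ are such that $m_-\|\mathbf V\|_2\le\|\sum_jV_j\phi_j\|_{{\cal H}_0}\le m_+\|\mathbf V\|_2$ for all $\mathbf V\in\mathbb{C}^N$. *)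

(* Defs.v *)
From HB Require Import structures.
From mathcomp Require Import all_boot all_order all_algebra.
From mathcomp Require Import complex.
From mathcomp Require Import boolp classical_sets reals.
Set Implicit Arguments.
Unset Strict Implicit.
Unset Printing Implicit Defensive.
Import Order.TTheory GRing.Theory Num.Theory.
Local Open Scope ring_scope.
Local Open Scope classical_set_scope.

Section Defs.
Variable R : realType.
Local Notation C := R[i].

Definition cmod (z : C) : R := ComplexField.Normc.normc z.

Definition is_linear (V W : lmodType C) (f : V -> W) :=
  forall (a : C) (u v : V), f (a *: u + v) = a *: f u + f v.

Definition is_linear_form (V : lmodType C) (f : V -> C) :=
  forall (a : C) (u v : V), f (a *: u + v) = a * f u + f v.

Definition is_antilinear_form (V : lmodType C) (f : V -> C) :=
  forall (a : C) (u v : V), f (a *: u + v) = conjc a * f u + f v.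

Definition is_sesquilinear (V : lmodType C) (s : V -> V -> C) :=
  (forall v, is_linear_form (fun u => s u v)) /\
  (forall u, is_antilinear_form (s u)).

Definition is_inner_product (V : lmodType C) (ip : V -> V -> C) :=
  [/\ forall v, is_linear_form (fun u => ip u v),
      forall u v, ip v u = conjc (ip u v),
      forall v, 0 <= complex.Re (ip v v)
    & forall v, ip v v = 0 -> v = 0].

Definition ipnorm (V : lmodType C) (ip : V -> V -> C) (v : V) : R :=
  Num.sqrt (complex.Re (ip v v)).

Definition complete_for (V : lmodType C) (ip : V -> V -> C) :=
  forall u : nat -> V,
    (forall e : R, 0 < e -> exists n0 : nat, forall m n : nat,
        (n0 <= m)%N -> (n0 <= n)%N -> ipnorm ip (u m - u n) < e) ->
    exists l : V, forall e : R, 0 < e -> exists n0 : nat, forall n : nat,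
        (n0 <= n)%N -> ipnorm ip (u n - l) < e.

Definition hilbert (V : lmodType C) (ip : V -> V -> C) :=
  is_inner_product ip /\ complete_for ip.

Definition bounded_op (V W : lmodType C) (ipV : V -> V -> C) (ipW : W -> W -> C)
  (T : V -> W) :=
  exists M : R, forall v, ipnorm ipW (T v) <= M * ipnorm ipV v.

Definition opnorm (V W : lmodType C) (ipV : V -> V -> C) (ipW : W -> W -> C)
  (T : V -> W) : R :=
  sup [set x : R | exists v : V, v <> 0 /\ x = ipnorm ipW (T v) / ipnorm ipV v].

Definition bounded_form (V : lmodType C) (ip : V -> V -> C) (s : V -> V -> C) :=
  exists M : R, forall u v, cmod (s u v) <= M * ipnorm ip u * ipnorm ip v.

(** The (anti)dual space H^* : bounded antilinear functionals, with dual norm *)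
Definition in_dual (V : lmodType C) (ip : V -> V -> C) (f : V -> C) :=
  is_antilinear_form f /\ exists M : R, forall v, cmod (f v) <= M * ipnorm ip v.

Definition dualnorm (V : lmodType C) (ip : V -> V -> C) (f : V -> C) : R :=
  sup [set x : R | exists v : V, v <> 0 /\ x = cmod (f v) / ipnorm ip v].

(* the operator A : H -> H^* associated with a form:  <A u, v> = a(u, v) *)
Definition opA (V : lmodType C) (a : V -> V -> C) (u : V) : V -> C := fun v => a u v.

Definition inv_opnorm (V : lmodType C) (ip : V -> V -> C) (Ainv : (V -> C) -> V) : R :=
  sup [set x : R | exists f : V -> C,
         [/\ in_dual ip f, f <> (fun _ => 0) &
             x = ipnorm ip (Ainv f) / dualnorm ip f]].

Definition aform (H H0 : lmodType C) (ip0 : H0 -> H0 -> C) (iota : H -> H0)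
  (DD : H -> H0) (b : H -> H -> C) (muinv eps : H0 -> H0) (u v : H) : C :=
  ip0 (muinv (DD u)) (DD v) + b u v - ip0 (eps (iota u)) (iota v).

(** Discrete notions: subspace H_N spanned by a basis phi : 'I_N -> H *)
Definition comb (V : lmodType C) (N : nat) (phi : 'I_N -> V) (X : 'cV[C]_N) : V :=
  \sum_(j < N) X j 0 *: phi j.

Definition lin_indep (V : lmodType C) (N : nat) (phi : 'I_N -> V) :=
  forall X : 'cV[C]_N, comb phi X = 0 -> X = 0.

Definition inspan (V : lmodType C) (N : nat) (phi : 'I_N -> V) (u : V) :=
  exists X : 'cV[C]_N, u = comb phi X.

Definition galerkin (V : lmodType C) (N : nat) (a : V -> V -> C) (phi : 'I_N -> V)
  : 'M[C]_N := \matrix_(i, j) a (phi j) (phi i).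

Definition infsup (V : lmodType C) (ip : V -> V -> C) (N : nat) (a : V -> V -> C)
  (phi : 'I_N -> V) : R :=
  inf [set x : R | exists u : V, [/\ inspan phi u, u <> 0 &
        x = sup [set y : R | exists v : V, [/\ inspan phi v, v <> 0 &
                   y = cmod (a u v) / (ipnorm ip u * ipnorm ip v)]]]].

Definition dot2 (N : nat) (X Y : 'cV[C]_N) : C := \sum_(i < N) X i 0 * conjc (Y i 0).

Definition vnorm2 (N : nat) (X : 'cV[C]_N) : R := Num.sqrt (complex.Re (dot2 X X)).

Definition vnormM (N : nat) (M : 'M[C]_N) (X : 'cV[C]_N) : R :=
  Num.sqrt (complex.Re (dot2 (M *m X) X)).

Definition mnorm (N : nat) (nrm : 'cV[C]_N -> R) (A : 'M[C]_N) : R :=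
  sup [set x : R | exists X : 'cV[C]_N, X <> 0 /\ x = nrm (A *m X) / nrm X].

Definition herm_posdef (N : nat) (M : 'M[C]_N) :=
  (forall i j, M i j = conjc (M j i)) /\
  (forall X : 'cV[C]_N, X <> 0 -> 0 < complex.Re (dot2 (M *m X) X)).

End Defs.

(* Main.v *)
Require Import Defs.
From HB Require Import structures.
From mathcomp Require Import all_boot all_order all_algebra.
From mathcomp Require Import complex.
From mathcomp Require Import boolp classical_sets reals.
From mathcomp Require Import ring lra.
Import Order.TTheory GRing.Theory Num.Theory.
Local Open Scope ring_scope.
Local Open Scope classical_set_scope.

Lemma cmodE (R : realType) (a b : R) : cmod (a +i* b)%C = Num.sqrt (a ^+ 2 + b ^+ 2).
Proof. by []. Qed.

Lemma cmod_ge0 (R : realType) (z : R[i]) : 0 <= cmod z.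
Proof. by case: z => a b; rewrite cmodE sqrtr_ge0. Qed.

Lemma cmodM (R : realType) (z w : R[i]) : cmod (z * w) = cmod z * cmod w.
Proof. exact: ComplexField.Normc.normcM. Qed.

Lemma cmodD (R : realType) (z w : R[i]) : cmod (z + w) <= cmod z + cmod w.
Proof. exact: le_normcD. Qed.

Lemma cmodN (R : realType) (z : R[i]) : cmod (- z) = cmod z.
Proof. exact: normcN. Qed.

Lemma cmodJ (R : realType) (z : R[i]) : cmod (conjc z) = cmod z.
Proof. by case: z => a b; rewrite /conjc !cmodE sqrrN. Qed.

Lemma cmod_real (R : realType) (r : R) : cmod (r%:C)%C = `|r|.
Proof. by rewrite /cmod /= expr0n /= addr0 sqrtr_sqr. Qed.

Lemma Re_le_cmod (R : realType) (z : R[i]) : complex.Re z <= cmod z.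
Proof.
case: z => a b; rewrite cmodE /=.
apply: le_trans (ler_norm a) _.
by rewrite -sqrtr_sqr ler_wsqrtr // lerDl sqr_ge0.
Qed.

Lemma cmod_eq0 (R : realType) (z : R[i]) : cmod z = 0 -> z = 0.
Proof. exact: ComplexField.Normc.eq0_normc. Qed.

Lemma cmod2 (R : realType) (z : R[i]) : cmod z ^+ 2 = complex.Re (z * conjc z).
Proof.
case: z => a b; rewrite cmodE sqr_sqrtr ?addr_ge0 ?sqr_ge0 //=.
by rewrite /= mulrN opprK expr2 expr2.
Qed.

Lemma cmulJ (R : realType) (c : R[i]) : c * conjc c = ((cmod c) ^+ 2)%:C%C.
Proof.
case: c => a b; rewrite cmodE sqr_sqrtr ?addr_ge0 ?sqr_ge0 //.
rewrite /conjc; simpc; rewrite /= !expr2; congr (_ +i* _)%C; ring.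
Qed.

Lemma selfconj_real (R : realType) (z : R[i]) : z = conjc z -> z = ((complex.Re z)%:C)%C.
Proof.
case: z => a b [] /eqP; rewrite -subr_eq0 opprK -mulr2n mulrn_eq0 /= => /eqP ->.
by [].
Qed.

Section LinFacts.
Variable R : realType.
Local Notation C := R[i].

Lemma lf0 {V : lmodType C} {f : V -> C} : is_linear_form f -> f 0 = 0.
Proof.
move=> hf; have := hf 1 0 0; rewrite scaler0 addr0 mul1r => h.
by apply: (addrI (f 0)); rewrite addr0 -h.
Qed.

Lemma lfD {V : lmodType C} {f : V -> C} : is_linear_form f -> forall u v, f (u + v) = f u + f v.
Proof. by move=> hf u v; rewrite -[u in LHS]scale1r hf mul1r. Qed.

Lemma lfZ {V : lmodType C} {f : V -> C} : is_linear_form f -> forall a u, f (a *: u) = a * f u.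
Proof. by move=> hf a u; rewrite -[a *: u]addr0 hf lf0 // addr0. Qed.

Lemma lfN {V : lmodType C} {f : V -> C} : is_linear_form f -> forall u, f (- u) = - f u.
Proof. by move=> hf u; rewrite -scaleN1r lfZ // mulN1r. Qed.

Lemma lfB {V : lmodType C} {f : V -> C} : is_linear_form f -> forall u v, f (u - v) = f u - f v.
Proof. by move=> hf u v; rewrite lfD // lfN. Qed.

Lemma lm0 {V W : lmodType C} {f : V -> W} : is_linear f -> f 0 = 0.
Proof.
move=> hf; have := hf 1 0 0; rewrite scaler0 addr0 scale1r => h.
by apply: (addrI (f 0)); rewrite addr0 -h.
Qed.

Lemma lmD {V W : lmodType C} {f : V -> W} : is_linear f -> forall u v, f (u + v) = f u + f v.
Proof. by move=> hf u v; rewrite -[u in LHS]scale1r hf scale1r. Qed.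

Lemma lmZ {V W : lmodType C} {f : V -> W} : is_linear f -> forall a u, f (a *: u) = a *: f u.
Proof. by move=> hf a u; rewrite -[a *: u]addr0 hf lm0 // addr0. Qed.

Lemma lmN {V W : lmodType C} {f : V -> W} : is_linear f -> forall u, f (- u) = - f u.
Proof. by move=> hf u; rewrite -scaleN1r lmZ // scaleN1r. Qed.

Lemma lmB {V W : lmodType C} {f : V -> W} : is_linear f -> forall u v, f (u - v) = f u - f v.
Proof. by move=> hf u v; rewrite lmD // lmN. Qed.

Section IP.
Variables (V : lmodType C) (s : V -> V -> C).
Hypothesis hs : is_inner_product s.

Lemma ipl v : is_linear_form (fun u => s u v).
Proof. by case: hs. Qed.

Lemma ipC u v : s v u = conjc (s u v).
Proof. by case: hs. Qed.

Lemma ipr u a v w : s u (a *: v + w) = conjc a * s u v + s u w.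
Proof.
rewrite ipC (ipl u) rmorphD rmorphM /= -!ipC; done.
Qed.

Lemma ipr0 u : s u 0 = 0.
Proof. by rewrite ipC (lf0 (ipl u)) conjc0. Qed.

Lemma ip0l u : s 0 u = 0.
Proof. exact: (lf0 (ipl u)). Qed.

Lemma iprD u v w : s u (v + w) = s u v + s u w.
Proof. by rewrite -[v in LHS]scale1r ipr rmorph1 mul1r. Qed.

Lemma iprZ u a v : s u (a *: v) = conjc a * s u v.
Proof. by rewrite -[a *: v]addr0 ipr ipr0 addr0. Qed.

Lemma ipvv v : s v v = ((complex.Re (s v v))%:C)%C.
Proof. apply: selfconj_real; exact: ipC. Qed.

Lemma ipRe_ge0 v : 0 <= complex.Re (s v v).
Proof. by case: hs. Qed.

Lemma ipn_ge0 v : 0 <= ipnorm s v.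
Proof. exact: sqrtr_ge0. Qed.

Lemma ipn_sq v : ipnorm s v ^+ 2 = complex.Re (s v v).
Proof. by rewrite sqr_sqrtr // ipRe_ge0. Qed.

Lemma ipn_gt0 v : v <> 0 -> 0 < ipnorm s v.
Proof.
move=> nv; rewrite sqrtr_gt0 lt_neqAle ipRe_ge0 andbT eq_sym; apply/eqP => h.
by apply: nv; case: hs => _ _ _; apply; rewrite ipvv h.
Qed.

Lemma ipn0 : ipnorm s 0 = 0.
Proof. by rewrite /ipnorm ip0l /= sqrtr0. Qed.

Lemma ipquad a b x y :
  s (a *: x + b *: y) (a *: x + b *: y) =
  a * conjc a * s x x + a * conjc b * s x y + b * conjc a * s y x + b * conjc b * s y y.
Proof.
rewrite (ipl _) (lfZ (ipl _)) !ipr !iprZ; ring.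
Qed.

Lemma CS u v : cmod (s u v) <= ipnorm s u * ipnorm s v.
Proof.
have [->|nv] := eqVneq v 0.
  by rewrite ipr0 ipn0 mulr0 /cmod /= expr0n /= addr0 sqrtr0.
have rpos : 0 < complex.Re (s v v) by rewrite -ipn_sq exprn_gt0 // ipn_gt0 //; apply/eqP.
set r := complex.Re (s v v) in rpos *.
set p := complex.Re (s u u).
set c := s u v.
have := ipRe_ge0 (r%:C%C *: u + (- c) *: v).
rewrite ipquad (ipvv u) (ipvv v) -/r -/p (ipC u v) -/c conjc_real raddfN /=.
have -> : r%:C%C * r%:C%C * p%:C%C + r%:C%C * - c^*%C * c + - c * r%:C%C * c^*%C + - c * - c^*%C * r%:C%C
   = (r * (r * p - cmod c ^+ 2))%:C%C.
  rewrite rmorphM rmorphB rmorphM /= -cmulJ; ring.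
move=> /=; rewrite pmulr_rge0 // subr_ge0 => hc.
rewrite /ipnorm -/r -/p -sqrtrM ?ipRe_ge0 //.
rewrite -[cmod c]ger0_norm ?cmod_ge0 // -sqrtr_sqr ler_wsqrtr //.
by rewrite mulrC.
Qed.

End IP.
End LinFacts.
Arguments ipl {R V s}. Arguments ipC {R V s}. Arguments ipr {R V s}. Arguments ipr0 {R V s}.
Arguments ip0l {R V s}. Arguments iprD {R V s}. Arguments iprZ {R V s}. Arguments ipvv {R V s}.
Arguments ipRe_ge0 {R V s}. Arguments ipn_ge0 {R V s}. Arguments ipn_sq {R V s}.
Arguments ipn_gt0 {R V s}. Arguments ipn0 {R V s}. Arguments ipquad {R V s}. Arguments CS {R V s}.
Arguments lf0 {R V f}. Arguments lfD {R V f}. Arguments lfZ {R V f}. Arguments lfN {R V f}. Arguments lfB {R V f}.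
Arguments lm0 {R V W f}. Arguments lmD {R V W f}. Arguments lmZ {R V W f}. Arguments lmN {R V W f}. Arguments lmB {R V W f}.
Arguments cmodE {R}. Arguments cmod_ge0 {R}. Arguments cmodM {R}. Arguments cmodD {R}. Arguments cmodN {R}.
Arguments cmodJ {R}. Arguments cmod_real {R}. Arguments Re_le_cmod {R}. Arguments cmod_eq0 {R}. Arguments cmod2 {R}.
Arguments cmulJ {R}. Arguments selfconj_real {R}.

Lemma ReD (R : realType) (z w : R[i]) : complex.Re (z + w) = complex.Re z + complex.Re w.
Proof. by case: z; case: w. Qed.

Lemma ReJ (R : realType) (z : R[i]) : complex.Re (conjc z) = complex.Re z.
Proof. by case: z. Qed.

Lemma ReN (R : realType) (z : R[i]) : complex.Re (- z) = - complex.Re z.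
Proof. by case: z. Qed.

Lemma Re_sum (R : realType) (n : nat) (F : 'I_n -> R[i]) :
  complex.Re (\sum_(i < n) F i) = \sum_(i < n) complex.Re (F i).
Proof.
elim/big_rec2: _ => //= i x y _ <-; by rewrite ReD.
Qed.

Section IP2.
Variable R : realType.
Local Notation C := R[i].
Variables (V : lmodType C) (s : V -> V -> C).
Hypothesis hs : is_inner_product s.

Lemma ipnN v : ipnorm s (- v) = ipnorm s v.
Proof.
rewrite /ipnorm (lfN (ipl hs _)) (ipC hs) (lfN (ipl hs _)) rmorphN opprK.
by case: (s v v).
Qed.

Lemma ipnD u v : ipnorm s (u + v) <= ipnorm s u + ipnorm s v.
Proof.
rewrite -[ipnorm s u + ipnorm s v]ger0_norm ?addr_ge0 ?ipn_ge0 // -sqrtr_sqr /ipnorm ler_wsqrtr //.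
rewrite (lfD (ipl hs _)) !(iprD hs) !ReD.
have -> : complex.Re (s v u) = complex.Re (s u v) by rewrite (ipC hs u v) ReJ.
rewrite sqrrD -!/(ipnorm s _) !ipn_sq // mulr2n.
have := Re_le_cmod (s u v); have := CS hs u v; lra.
Qed.

Lemma ipnB u v : ipnorm s (u - v) <= ipnorm s u + ipnorm s v.
Proof. by rewrite -(ipnN v) ipnD. Qed.

Lemma ipnZ a v : ipnorm s (a *: v) = cmod a * ipnorm s v.
Proof.
rewrite /ipnorm (lfZ (ipl hs _)) (iprZ hs) mulrA cmulJ (ipvv hs v).
rewrite -rmorphM /= sqrtrM ?sqr_ge0 // sqrtr_sqr ger0_norm ?cmod_ge0 //.
Qed.

End IP2.

Lemma unit_of_inj (R : realType) n (A : 'M[R[i]]_n) :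
  (forall X : 'cV[R[i]]_n, A *m X = 0 -> X = 0) -> A \in unitmx.
Proof.
move=> hA; rewrite unitmxE unitfE -det_tr; apply/negP => /det0P [v nv vA].
have : A *m v^T = 0 by rewrite -[A]trmxK -trmx_mul vA trmx0.
move/hA/(congr1 trmx); rewrite trmxK trmx0 => v0; by rewrite v0 eqxx in nv.
Qed.

Section Dot.
Variable R : realType.
Local Notation C := R[i].

Lemma dot2C n (X Y : 'cV[C]_n) : dot2 Y X = conjc (dot2 X Y).
Proof.
rewrite /dot2 rmorph_sum; apply: eq_bigr => i _.
by rewrite rmorphM /= conjcK mulrC.
Qed.

Lemma dot2_lin n (M : 'M[C]_n) (Y : 'cV[C]_n) : is_linear_form (fun X => dot2 (M *m X) Y).
Proof.
move=> a X Z; rewrite /dot2 mulmxDr -scalemxAr mulr_sumr -big_split /=.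
by apply: eq_bigr => i _; rewrite !mxE; ring.
Qed.

Lemma dot2_adj n (M : 'M[C]_n) (X Y : 'cV[C]_n) :
  (forall i j, M i j = conjc (M j i)) -> dot2 (M *m X) Y = dot2 X (M *m Y).
Proof.
move=> hM; rewrite /dot2.
under eq_bigr => i _ do rewrite mxE mulr_suml.
rewrite exchange_big /=; apply: eq_bigr => j _.
rewrite mxE rmorph_sum mulr_sumr; apply: eq_bigr => i _.
by rewrite rmorphM /= -hM; ring.
Qed.

Lemma herm_ip n (M : 'M[C]_n) : herm_posdef M -> is_inner_product (fun X Y => dot2 (M *m X) Y).
Proof.
move=> [hH hP]; split.
- move=> Y; exact: dot2_lin.
- by move=> X Y; rewrite dot2_adj // dot2C.
- move=> X; have [->|nX] := eqVneq X 0.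
    by rewrite mulmx0 /dot2 big1 // => i _; rewrite mxE mul0r.
  by apply: ltW; apply: hP; apply/eqP.
- move=> X h; apply/eqP; apply/negPn/negP => nX.
  by have := hP X (elimN eqP nX); rewrite h lt_irreflexive.
Qed.

Lemma herm_unit n (M : 'M[C]_n) : herm_posdef M -> M \in unitmx.
Proof.
move=> [hH hP]; apply: unit_of_inj => X hX; apply/eqP; apply/negPn/negP => nX.
have := hP X (elimN eqP nX); rewrite hX /dot2 big1 ?lt_irreflexive // => i _.
by rewrite mxE mul0r.
Qed.

Lemma herm_inv_ip n (M : 'M[C]_n) : herm_posdef M ->
  is_inner_product (fun X Y => dot2 (invmx M *m X) Y).
Proof.
move=> hM; have uM := @herm_unit n M hM; have hI := @herm_ip n M hM.
have [hH hP] := hM.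
have key : forall X Y, dot2 (invmx M *m X) Y = dot2 X (invmx M *m Y).
  move=> X Y; rewrite -[Y in LHS](mulKVmx uM) -(@dot2_adj n M) //.
  by rewrite mulKVmx.
split.
- move=> Y; exact: dot2_lin.
- by move=> X Y; rewrite key dot2C.
- move=> X; rewrite -[X in dot2 _ X](mulKVmx uM) -(@dot2_adj n M) //.
  exact: (ipRe_ge0 hI).
- move=> X; rewrite -[X in dot2 _ X](mulKVmx uM) -(@dot2_adj n M) // => h.
  have : invmx M *m X = 0 by case: hI => _ _ _; apply.
  by move/(congr1 (mulmx M)); rewrite mulKVmx // mulmx0.
Qed.

Lemma id_posdef n : herm_posdef (1%:M : 'M[C]_n).
Proof.
split.
- by move=> i j; rewrite !mxE eq_sym conjc_nat.
- move=> X nX; rewrite mul1mx /dot2 Re_sum.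
  have [i Xi] : exists i, X i 0 != 0.
    apply: contrapT => h; apply: nX; apply/matrixP => i j; rewrite (ord1 j) mxE.
    apply/eqP; apply: contrapT => /negP hi; apply: h; by exists i.
  rewrite (bigD1 i) //= ltr_pwDl //.
    rewrite cmulJ /= exprn_gt0 // lt_neqAle cmod_ge0 andbT eq_sym.
    by apply/eqP => /cmod_eq0 /eqP; rewrite (negbTE Xi).
  by apply: sumr_ge0 => j _; rewrite cmulJ /= sqr_ge0.
Qed.

Lemma dot2_ip n : is_inner_product (@dot2 R n).
Proof.
have := @herm_ip n 1%:M (@id_posdef n).
have -> : (fun X Y : 'cV[C]_n => dot2 (1%:M *m X) Y) = @dot2 R n.
  by apply: funext => X; apply: funext => Y; rewrite mul1mx.
done.
Qed.

End Dot.
Arguments ipnN {R V s}. Arguments ipnD {R V s}. Arguments ipnB {R V s}. Arguments ipnZ {R V s}.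
Arguments dot2C {R n}. Arguments dot2_lin {R n}. Arguments dot2_adj {R n}.
Arguments herm_ip {R n}. Arguments herm_unit {R n}. Arguments herm_inv_ip {R n}.

Lemma sup_ge0 (R : realType) (E : set R) : (forall x, E x -> 0 <= x) -> 0 <= sup E.
Proof.
move=> h; have [hE|hE] := pselect (has_sup E); last by rewrite sup_out.
have [x Ex] := hE.1; apply: le_trans (h x Ex) _.
by apply: ub_le_sup => //; exact: hE.2.
Qed.

Lemma ratio_le_sup (R : realType) (T : Type) (P : T -> Prop) (f g : T -> R) (M : R) (v : T) :
  (forall w, P w -> 0 < g w) -> (forall w, P w -> f w <= M * g w) -> P v ->
  f v / g v <= sup [set x | exists w, P w /\ x = f w / g w].
Proof.
move=> hg hf Pv; apply: ub_le_sup; last by exists v.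
exists M => x [w [Pw ->]]; by rewrite ler_pdivrMr ?hg // hf.
Qed.

Lemma ratio_sup_le (R : realType) (T : Type) (P : T -> Prop) (f g : T -> R) (c : R) :
  (exists v, P v) -> (forall w, P w -> 0 < g w) -> (forall w, P w -> f w <= c * g w) ->
  sup [set x | exists w, P w /\ x = f w / g w] <= c.
Proof.
move=> [v Pv] hg hf; apply: ge_sup; first by exists (f v / g v), v.
move=> x [w [Pw ->]]; by rewrite ler_pdivrMr ?hg // hf.
Qed.

Section Ops.
Variable R : realType.
Local Notation C := R[i].

Lemma opnorm_bound (V : lmodType C) (s : V -> V -> C) (T : V -> V) :
  is_inner_product s -> is_linear T -> bounded_op s s T ->
  forall v, ipnorm s (T v) <= opnorm s s T * ipnorm s v.
Proof.
move=> hs hT [M hM] v; have [->|nv] := eqVneq v 0.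
  by rewrite (lm0 hT) (ipn0 hs) mulr0.
have gv := ipn_gt0 hs v (elimN eqP nv).
rewrite -ler_pdivrMr //.
apply: (@ratio_le_sup R V (fun w => w <> 0) (fun w => ipnorm s (T w)) (ipnorm s) M v) => //.
- by move=> w; exact: ipn_gt0 hs w.
- by apply/eqP.
Qed.

Lemma opnorm_ge0 (V : lmodType C) (s : V -> V -> C) (T : V -> V) : 0 <= opnorm s s T.
Proof.
apply: sup_ge0 => x [w [_ ->]]; apply: divr_ge0; exact: ipn_ge0.
Qed.

Lemma bounded_sub (V : lmodType C) (s : V -> V -> C) (T1 T2 : V -> V) :
  is_inner_product s -> bounded_op s s T1 -> bounded_op s s T2 ->
  bounded_op s s (fun v => T1 v - T2 v).
Proof.
move=> hs [M1 h1] [M2 h2]; exists (M1 + M2) => v.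
apply: le_trans (ipnB hs _ _) _; rewrite mulrDl; exact: lerD.
Qed.

Lemma linear_sub (V : lmodType C) (T1 T2 : V -> V) :
  is_linear T1 -> is_linear T2 -> is_linear (fun v => T1 v - T2 v).
Proof.
move=> h1 h2 a u v; by rewrite h1 h2 scalerBr opprD addrACA.
Qed.

Lemma mnorm_le n (nrm : 'cV[C]_n -> R) (A : 'M[C]_n) (c : R) : (0 < n)%N ->
  (forall X, X <> 0 -> 0 < nrm X) -> (forall X, X <> 0 -> nrm (A *m X) <= c * nrm X) ->
  mnorm nrm A <= c.
Proof.
move=> n0 hp hb; apply: (@ratio_sup_le R _ (fun X => X <> 0) (fun X => nrm (A *m X)) nrm c) => //.
exists (const_mx 1) => /matrixP /(_ (Ordinal n0) 0); rewrite !mxE => /eqP.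
by rewrite oner_eq0.
Qed.

Lemma lf_sum (V : lmodType C) (f : V -> C) n (F : 'I_n -> V) :
  is_linear_form f -> f (\sum_(i < n) F i) = \sum_(i < n) f (F i).
Proof. move=> hf; exact: (big_morph f (lfD hf) (lf0 hf)). Qed.

Lemma alf0 (V : lmodType C) (f : V -> C) : is_antilinear_form f -> f 0 = 0.
Proof.
move=> hf; have := hf 1 0 0; rewrite scaler0 addr0 rmorph1 mul1r => h.
by apply: (addrI (f 0)); rewrite addr0 -h.
Qed.

Lemma alfD (V : lmodType C) (f : V -> C) : is_antilinear_form f -> forall u v, f (u + v) = f u + f v.
Proof. by move=> hf u v; rewrite -[u in LHS]scale1r hf rmorph1 mul1r. Qed.

Lemma alfZ (V : lmodType C) (f : V -> C) : is_antilinear_form f -> forall a u, f (a *: u) = conjc a * f u.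
Proof. by move=> hf a u; rewrite -[a *: u]addr0 hf (alf0 _ _ hf) addr0. Qed.

Lemma alf_sum (V : lmodType C) (f : V -> C) n (F : 'I_n -> V) :
  is_antilinear_form f -> f (\sum_(i < n) F i) = \sum_(i < n) f (F i).
Proof. move=> hf; exact: (big_morph f (alfD _ _ hf) (alf0 _ _ hf)). Qed.

Lemma galerkinE (V : lmodType C) (a : V -> V -> C) n (phi : 'I_n -> V) (X Y : 'cV[C]_n) :
  is_sesquilinear a -> a (comb phi X) (comb phi Y) = dot2 (galerkin a phi *m X) Y.
Proof.
move=> [hl hr]; rewrite /comb /dot2 (lf_sum _ _ _ _ (hl _)).
under eq_bigr => j _ do rewrite (lfZ (hl _)) (alf_sum _ _ _ _ (hr _)) mulr_sumr.
rewrite exchange_big /=; apply: eq_bigr => i _.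
rewrite !mxE mulr_suml; apply: eq_bigr => j _.
rewrite (alfZ _ _ (hr _)) !mxE; ring.
Qed.

Lemma dot2B n (P Q Y : 'cV[C]_n) : dot2 (P - Q) Y = dot2 P Y - dot2 Q Y.
Proof. by rewrite /dot2 -sumrB; apply: eq_bigr => i _; rewrite !mxE mulrBl. Qed.

End Ops.

Lemma div_bound (R : realType) (a b k : R) : 0 < b -> 0 < k -> 1 / k <= a / b -> b <= k * a.
Proof.
move=> b0 k0; rewrite ler_pdivlMr // mul1r mulrC ler_pdivrMr // mulrC //.
Qed.

Lemma sq_le (R : realType) (x c : R) : 0 <= x -> 0 <= c -> x ^+ 2 <= c * x -> x <= c.
Proof. move=> x0 c0 h; rewrite expr2 in h; nra. Qed.

Lemma cmodB (R : realType) (z w : R[i]) : cmod (z - w) <= cmod z + cmod w.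
Proof. by apply: le_trans (cmodD _ _) _; rewrite cmodN. Qed.

Lemma cmod_realp (R : realType) (r : R) : 0 <= r -> cmod (r%:C)%C = r.
Proof. by move=> r0; rewrite cmod_real ger0_norm. Qed.

Section Prob.
Variable R : realType.
Local Notation C := R[i].

Lemma ip_dual (V : lmodType C) (s : V -> V -> C) (w : V) (c : R) :
  is_inner_product s -> 0 <= c -> (forall y, cmod (s w y) <= c * ipnorm s y) ->
  ipnorm s w <= c.
Proof.
move=> hs c0 h; apply: sq_le => //; first exact: ipn_ge0.
have := h w; rewrite (ipvv hs w) cmod_realp ?ipRe_ge0 // -ipn_sq //.
Qed.

Lemma nD_Di n (D : 'M[C]_n) (W : 'cV[C]_n) : herm_posdef D ->
  vnormM D (invmx D *m W) = vnormM (invmx D) W.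
Proof.
move=> hD; rewrite /vnormM mulKVmx ?herm_unit // dot2C ReJ //.
Qed.

Lemma CSdual n (D : 'M[C]_n) (W Y : 'cV[C]_n) : herm_posdef D ->
  cmod (dot2 W Y) <= vnormM (invmx D) W * vnormM D Y.
Proof.
move=> hD; rewrite -{1}[W](mulKVmx (herm_unit _ hD)) -nD_Di //.
exact: (CS (herm_ip _ hD)).
Qed.

Lemma dualD n (D : 'M[C]_n) (W : 'cV[C]_n) (c : R) : herm_posdef D -> 0 <= c ->
  (forall Y, cmod (dot2 W Y) <= c * vnormM D Y) -> vnormM (invmx D) W <= c.
Proof.
move=> hD c0 h; have hi := herm_inv_ip _ hD.
apply: sq_le => //; first exact: sqrtr_ge0.
have := h (invmx D *m W); rewrite nD_Di // dot2C.
rewrite (ipvv hi W) conjc_real cmod_realp ?(ipRe_ge0 hi) //.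
by rewrite -(ipn_sq hi).
Qed.

Section Form.
Variables (H H0 : lmodType C) (ip0 : H0 -> H0 -> C) (iota DD : H -> H0) (b : H -> H -> C).
Hypotheses (hip0 : is_inner_product ip0) (hi : is_linear iota) (hD : is_linear DD)
  (hb : is_sesquilinear b).

Lemma aform_ses (mu eps : H0 -> H0) : is_linear mu -> is_linear eps ->
  is_sesquilinear (aform ip0 iota DD b mu eps).
Proof.
move=> hmu heps; split.
- move=> v a u w; rewrite /aform hD hmu hi heps !(ipl hip0 _) hb.1; ring.
- move=> u a v w; rewrite /aform hD hi !(ipr hip0) hb.2; ring.
Qed.

Lemma adiff (mu1 mu2 e1 e2 : H0 -> H0) x y :
  aform ip0 iota DD b mu2 e2 x y - aform ip0 iota DD b mu1 e1 x y =
  ip0 (e1 (iota x) - e2 (iota x)) (iota y) - ip0 (mu1 (DD x) - mu2 (DD x)) (DD y).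
Proof. rewrite /aform !(lfB (ipl hip0 _)); ring. Qed.

Lemma aform_bound (mu eps : H0 -> H0) (ip : H -> H -> C) (Mb : R) u v :
  (forall v, ipnorm ip0 (iota v) <= ipnorm ip v) ->
  (forall v, ipnorm ip0 (DD v) <= ipnorm ip v) ->
  (forall u v, cmod (b u v) <= Mb * ipnorm ip u * ipnorm ip v) ->
  cmod (aform ip0 iota DD b mu eps u v) <=
  (ipnorm ip0 (mu (DD u)) + Mb * ipnorm ip u + ipnorm ip0 (eps (iota u))) * ipnorm ip v.
Proof.
move=> hin hDn hbb; rewrite /aform.
apply: le_trans (cmodB _ _ _) _; rewrite !mulrDl.
apply: lerD; first apply: le_trans (cmodD _ _) _.
- apply: lerD; last exact: hbb.
  apply: le_trans (CS hip0 _ _) _; apply: ler_wpM2l; [exact: ipn_ge0|exact: hDn].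
- apply: le_trans (CS hip0 _ _) _; apply: ler_wpM2l; [exact: ipn_ge0|exact: hin].
Qed.

End Form.
End Prob.

Lemma pq_bound (R : realType) (p q d a A c : R) : 0 <= p -> 0 <= q -> 0 <= d ->
  p <= d * a -> a <= A -> q <= c -> p * q <= d * A * c.
Proof.
move=> p0 q0 d0 hp ha hq; apply: ler_pM => //.
apply: le_trans hp _; exact: ler_wpM2l.
Qed.

Lemma rA (R : realType) (a b c : R) : 2 * a * b * c = 2 * b * (a * c).
Proof. ring. Qed.
Lemma rB (R : realType) (a b c : R) : 2 * a * b * c = a * (2 * b * c).
Proof. ring. Qed.
Lemma rC (R : realType) (p m d k w : R) : 2 * (p / m) * d * k * w = 2 * k * (d * (p * w)) / m.
Proof. ring. Qed.
Lemma rD (R : realType) (p m d k w : R) : 2 * (p / m) * d * k * w = d * (2 * k * (w / m)) * p.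
Proof. ring. Qed.
Lemma b4 (R : realType) (x t a g dd k : R) : x <= k * t -> t <= a + g -> g <= dd * x ->
  0 <= x -> 0 <= a -> 0 <= g -> dd * k <= 1/2 -> 0 < k -> 0 <= dd -> x <= 2 * k * a.
Proof. move=> *; nra. Qed.
Lemma max_le (R : realType) (x y c : R) : x <= c -> y <= c -> Num.max x y <= c.
Proof. by move=> hx hy; rewrite ge_max hx hy. Qed.

Theorem theorem4p2 (R : realType) (H H0 : lmodType R[i])
  (ip : H -> H -> R[i]) (ip0 : H0 -> H0 -> R[i]) (iota : H -> H0)
  (DD : H -> H0) (b : H -> H -> R[i])
  (mu1inv mu2inv eps1 eps2 : H0 -> H0)
  (A1inv : (H -> R[i]) -> H)
  (phi : forall N : nat, 'I_N -> H) (C1 : R) :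
  (* standing assumptions *)
  hilbert ip -> hilbert ip0 ->
  is_linear iota -> injective iota ->
  (forall v, ipnorm ip0 (iota v) <= ipnorm ip v) ->
  is_linear DD -> (forall u, ipnorm ip0 (DD u) <= ipnorm ip u) ->
  is_sesquilinear b -> bounded_form ip b ->
  is_linear mu1inv -> bounded_op ip0 ip0 mu1inv ->
  is_linear mu2inv -> bounded_op ip0 ip0 mu2inv ->
  is_linear eps1 -> bounded_op ip0 ip0 eps1 ->
  is_linear eps2 -> bounded_op ip0 ip0 eps2 ->
  (exists CG1 CG2 : R, [/\ 0 < CG1, 0 < CG2 & forall v : H,
     CG1 * ipnorm ip v ^+ 2 <=
       cmod (aform ip0 iota DD b mu1inv eps1 v v + (CG2 * ipnorm ip0 (iota v) ^+ 2)%:C%C)]) ->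
  (exists CG1 CG2 : R, [/\ 0 < CG1, 0 < CG2 & forall v : H,
     CG1 * ipnorm ip v ^+ 2 <=
       cmod (aform ip0 iota DD b mu2inv eps2 v v + (CG2 * ipnorm ip0 (iota v) ^+ 2)%:C%C)]) ->
  (* A_1 : H -> H^* is invertible, with (bounded) inverse A1inv : H^* -> H *)
  (forall u : H, A1inv (opA (aform ip0 iota DD b mu1inv eps1) u) = u) ->
  (forall f : H -> R[i], in_dual ip f ->
     opA (aform ip0 iota DD b mu1inv eps1) (A1inv f) = f) ->
  (exists M : R, forall f : H -> R[i], in_dual ip f ->
     ipnorm ip (A1inv f) <= M * dualnorm ip f) ->
  (* the discrete spaces H_N = span (phi N), of dimension N *)
  (forall N : nat, (0 < N)%N -> lin_indep (phi N)) ->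
  0 < C1 ->
  (forall N : nat, (0 < N)%N ->
     infsup ip (aform ip0 iota DD b mu1inv eps1) (phi N)
       >= 1 / (C1 * inv_opnorm ip A1inv)) ->
  (forall N : nat, (0 < N)%N -> forall v : H, inspan (phi N) v -> v <> 0 ->
     0 < sup [set x : R | exists u : H, [/\ inspan (phi N) u, u <> 0 &
              x = cmod (aform ip0 iota DD b mu1inv eps1 u v)]]) ->
  (opnorm ip0 ip0 (fun v => mu1inv v - mu2inv v)
     + opnorm ip0 ip0 (fun v => eps1 v - eps2 v)) * C1 * inv_opnorm ip A1inv
     <= 1 / 2 ->
  forall (N : nat) (DM : 'M[R[i]]_N), (0 < N)%N ->
  herm_posdef DM ->
  (forall X : 'cV[R[i]]_N, ipnorm ip (comb (phi N) X) = vnormM DM X) ->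
  let A1 := galerkin (aform ip0 iota DD b mu1inv eps1) (phi N) in
  let A2 := galerkin (aform ip0 iota DD b mu2inv eps2) (phi N) in
  [/\ A2 \in unitmx,
      Num.max (mnorm (vnormM DM) (1%:M - invmx A2 *m A1))
              (mnorm (vnormM (invmx DM)) (1%:M - A1 *m invmx A2))
        <= 2 * (opnorm ip0 ip0 (fun v => mu1inv v - mu2inv v)
                 + opnorm ip0 ip0 (fun v => eps1 v - eps2 v))
             * C1 * inv_opnorm ip A1inv
    & mu1inv = mu2inv ->
      forall m_minus m_plus : R, 0 < m_minus -> 0 < m_plus ->
      (forall X : 'cV[R[i]]_N,
         m_minus * vnorm2 X <= ipnorm ip0 (iota (comb (phi N) X)) <= m_plus * vnorm2 X) ->
      Num.max (mnorm (@vnorm2 R N) (1%:M - invmx A2 *m A1))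
              (mnorm (@vnorm2 R N) (1%:M - A1 *m invmx A2))
        <= 2 * (m_plus / m_minus) * opnorm ip0 ip0 (fun v => eps1 v - eps2 v)
             * C1 * inv_opnorm ip A1inv].
Proof.
move=> hH hH0 hi iinj hin hD hDn hb hbB hmu1 hmu1B hmu2 hmu2B he1 he1B he2 he2B _ _.
move=> hA1l hA1r [Mi hMi] hind C1pos hinfsup hsup0 hsmall N DM N0 hDM hcomb A1 A2.
have hip := hH.1; have hip0 := hH0.1.
set a1 := aform ip0 iota DD b mu1inv eps1 in hA1l hA1r hinfsup hsup0 A1 *.
set a2 := aform ip0 iota DD b mu2inv eps2 in A2 *.
have sa1 : is_sesquilinear a1 by apply: aform_ses.
have sa2 : is_sesquilinear a2 by apply: aform_ses.
set dm := opnorm ip0 ip0 (fun v => mu1inv v - mu2inv v) in hsmall *.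
set de := opnorm ip0 ip0 (fun v => eps1 v - eps2 v) in hsmall *.
set inv := inv_opnorm ip A1inv in hinfsup hsmall *.
have hdm : forall v, ipnorm ip0 (mu1inv v - mu2inv v) <= dm * ipnorm ip0 v.
  apply: (opnorm_bound _ _ _ _ hip0 (linear_sub _ _ _ _ hmu1 hmu2)).
  exact: (bounded_sub _ _ _ _ _ hip0 hmu1B hmu2B).
have hde : forall v, ipnorm ip0 (eps1 v - eps2 v) <= de * ipnorm ip0 v.
  apply: (opnorm_bound _ _ _ _ hip0 (linear_sub _ _ _ _ he1 he2)).
  exact: (bounded_sub _ _ _ _ _ hip0 he1B he2B).
have dm0 : 0 <= dm by apply: opnorm_ge0.
have de0 : 0 <= de by apply: opnorm_ge0.
have hDi := herm_inv_ip _ hDM; have hDp := herm_ip _ hDM; have uDM := herm_unit _ hDM.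
have h2 := @dot2_ip R N.
have nDpos : forall X : 'cV[R[i]]_N, X <> 0 -> 0 < vnormM DM X.
  by move=> X nX; apply: (ipn_gt0 hDp X nX).
have nDipos : forall X : 'cV[R[i]]_N, X <> 0 -> 0 < vnormM (invmx DM) X.
  by move=> X nX; apply: (ipn_gt0 hDi X nX).
have n2pos : forall X : 'cV[R[i]]_N, X <> 0 -> 0 < vnorm2 X.
  by move=> X nX; apply: (ipn_gt0 h2 X nX).
have nD0 : forall X : 'cV[R[i]]_N, 0 <= vnormM DM X by move=> X; exact: sqrtr_ge0.
have nDi0 : forall X : 'cV[R[i]]_N, 0 <= vnormM (invmx DM) X by move=> X; exact: sqrtr_ge0.
have n20 : forall X : 'cV[R[i]]_N, 0 <= vnorm2 X by move=> X; exact: sqrtr_ge0.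
have combnz : forall X, X <> 0 -> comb (phi N) X <> 0.
  by move=> X nX c0; apply: nX; apply: (hind N N0).
have X0nz : (const_mx 1 : 'cV[R[i]]_N) <> 0.
  move=> /matrixP /(_ (Ordinal N0) 0); rewrite !mxE => /eqP; by rewrite oner_eq0.
set u0 := comb (phi N) (const_mx 1).
have u0nz : u0 <> 0 := combnz _ X0nz.
have [Mb hMb] := hbB.
set f := opA a1 u0.
have fdual : in_dual ip f.
  split; first exact: sa1.2 u0.
  exists (ipnorm ip0 (mu1inv (DD u0)) + Mb * ipnorm ip u0 + ipnorm ip0 (eps1 (iota u0))).
  move=> v; exact: (@aform_bound R H H0 ip0 iota DD b hip0 mu1inv eps1 ip Mb u0 v hin hDn hMb).
have opA0 : opA a1 0 = (fun _ => 0).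
  apply: funext => v; rewrite /opA; exact: (lf0 (sa1.1 v)).
have fnz : f <> (fun _ => 0).
  move=> hf; apply: u0nz; have := hA1l u0; rewrite -/f hf -opA0 (hA1l 0) => <-; done.
have [v0 fv0] : exists v, f v <> 0.
  apply: contrapT => hn; apply: fnz; apply: funext => v; apply: contrapT => hv; apply: hn; by exists v.
have v0nz : v0 <> 0.
  move=> e; apply: fv0; rewrite e; exact: (alf0 _ _ _ fdual.1).
have [Mf hMf] := fdual.2.
have dpos : 0 < dualnorm ip f.
  apply: lt_le_trans _ (@ratio_le_sup R H (fun v => v <> 0) (fun v => cmod (f v)) (ipnorm ip) Mf v0 _ _ v0nz).
  - apply: divr_gt0; last exact: ipn_gt0 hip v0 v0nz.
    rewrite lt_neqAle cmod_ge0 andbT eq_sym; apply/eqP => /cmod_eq0; exact: fv0.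
  - move=> w; exact: ipn_gt0 hip w.
  - move=> w _; exact: hMf.
have invpos : 0 < inv.
  have e := hA1l u0; rewrite -/f in e.
  apply: lt_le_trans (_ : 0 < ipnorm ip u0 / dualnorm ip f) _.
    by apply: divr_gt0 => //; exact: ipn_gt0 hip u0 u0nz.
  have hub : has_ubound [set x : R | exists g : H -> R[i],
         [/\ in_dual ip g, g <> (fun _ => 0) &
             x = ipnorm ip (A1inv g) / dualnorm ip g]].
    exists `|Mi| => x [g [gd gnz ->]].
    have dg0 : 0 <= dualnorm ip g.
      apply: sup_ge0 => y [w [_ ->]]; apply: divr_ge0; [exact: cmod_ge0 | exact: ipn_ge0].
    have [d0|dp] := eqVneq (dualnorm ip g) 0.
      by rewrite d0 invr0 mulr0 normr_ge0.
    have dp' : 0 < dualnorm ip g by rewrite lt_neqAle eq_sym dp dg0.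
    rewrite ler_pdivrMr //; apply: le_trans (hMi g gd) _.
    by apply: ler_wpM2r => //; exact: ler_norm.
  apply: (ub_le_sup hub); exists f; split => //; by rewrite e.
have kpos : 0 < C1 * inv := mulr_gt0 C1pos invpos.
set k := C1 * inv in kpos.
have B1 : forall X, vnormM DM X <= k * vnormM (invmx DM) (A1 *m X).
  move=> X; have [->|nX] := eqVneq X 0.
    have -> : vnormM DM 0 = 0 by exact: (ipn0 hDp).
    by rewrite mulr_ge0 // ltW.
  have nX' : X <> 0 by apply/eqP.
  set u := comb (phi N) X.
  have unz : u <> 0 := combnz X nX'.
  have hu : ipnorm ip u = vnormM DM X := hcomb X.
  apply: div_bound; [exact: nDpos | exact: kpos |].
  apply: le_trans (hinfsup N N0) _.
  set T := [set y : R | exists v : H, [/\ inspan (phi N) v, v <> 0 &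
              y = cmod (a1 u v) / (ipnorm ip u * ipnorm ip v)]].
  have hlb : has_lbound [set x : R | exists u : H, [/\ inspan (phi N) u, u <> 0 &
        x = sup [set y : R | exists v : H, [/\ inspan (phi N) v, v <> 0 &
                   y = cmod (a1 u v) / (ipnorm ip u * ipnorm ip v)]]]].
    exists 0 => x [w [_ _ ->]]; apply: sup_ge0 => y [v [_ _ ->]].
    by apply: divr_ge0; [exact: cmod_ge0 | apply: mulr_ge0; exact: ipn_ge0].
  apply: (@le_trans _ _ (sup T)).
    by apply: (ge_inf hlb); exists u; split => //; exists X.
  apply: ge_sup; first by exists (cmod (a1 u u) / (ipnorm ip u * ipnorm ip u)), u; split => //; exists X.
  move=> y [v [[Y ->] vnz ->]].
  rewrite hu hcomb galerkinE //.
  have nY : 0 < vnormM DM Y by rewrite -hcomb; exact: ipn_gt0 hip _ vnz.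
  have nXp := nDpos X nX'.
  rewrite ler_pdivrMr ?mulr_gt0 //.
  apply: le_trans (CSdual _ _ _ _ _ hDM) _.
  by rewrite mulrA divfK // lt0r_neq0.
have F3a : forall X Y, cmod (dot2 ((A2 - A1) *m X) Y) <=
   ipnorm ip0 (eps1 (iota (comb (phi N) X)) - eps2 (iota (comb (phi N) X))) * ipnorm ip0 (iota (comb (phi N) Y))
 + ipnorm ip0 (mu1inv (DD (comb (phi N) X)) - mu2inv (DD (comb (phi N) X))) * ipnorm ip0 (DD (comb (phi N) Y)).
  move=> X Y; rewrite mulmxBl dot2B /A1 /A2 -!galerkinE //.
  rewrite /a1 /a2 adiff //.
  apply: le_trans (cmodB _ _ _) _; apply: lerD; exact: CS hip0 _ _.
have B2 : forall X, vnormM (invmx DM) ((A2 - A1) *m X) <= (dm + de) * vnormM DM X.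
  move=> X; apply: (dualD _ _ _ _ _ hDM); first by apply: mulr_ge0 => //; apply: addr_ge0.
  move=> Y; apply: le_trans (F3a X Y) _.
  rewrite -!hcomb !mulrDl [X in _ <= X]addrC.
  apply: lerD; apply: pq_bound => //; try exact: ipn_ge0.
have hk : (dm + de) * k <= 1 / 2 by rewrite /k mulrA.
have dd0 : 0 <= dm + de by apply: addr_ge0.
have B4 : forall X, vnormM DM X <= 2 * k * vnormM (invmx DM) (A2 *m X).
  move=> X; have g1 := B1 X.
  have e : A1 *m X = A2 *m X - (A2 - A1) *m X by rewrite mulmxBl opprB addrCA subrr addr0.
  rewrite e in g1.
  have g2 : vnormM (invmx DM) (A2 *m X - (A2 - A1) *m X) <=
     vnormM (invmx DM) (A2 *m X) + vnormM (invmx DM) ((A2 - A1) *m X) := ipnB hDi _ _.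
  have g3 := B2 X.
  have g4 := nD0 X; have g5 := nDi0 (A2 *m X); have g6 := nDi0 ((A2 - A1) *m X).
  exact: (b4 _ _ _ _ _ _ _ g1 g2 g3 g4 g5 g6 hk kpos dd0).
have uA2 : A2 \in unitmx.
  apply: unit_of_inj => X hX; apply: contrapT => nX.
  have := B4 X; rewrite hX.
  have -> : vnormM (invmx DM) 0 = 0 by exact: (ipn0 hDi).
  rewrite mulr0 => h; have := nDpos X nX; by rewrite ltNge h.
have eY : forall W : 'cV[R[i]]_N, A2 *m ((1%:M - invmx A2 *m A1) *m W) = (A2 - A1) *m W.
  by move=> W; rewrite mulmxBl mul1mx mulmxBr -mulmxA mulKVmx // mulmxBl.
have eZ : forall Z : 'cV[R[i]]_N, (1%:M - A1 *m invmx A2) *m Z = (A2 - A1) *m (invmx A2 *m Z).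
  by move=> Z; rewrite mulmxBl mul1mx -mulmxA mulmxBl mulKVmx.
have P1a : mnorm (vnormM DM) (1%:M - invmx A2 *m A1) <= 2 * (dm + de) * k.
  apply: (mnorm_le _ _ _ _ _ N0 nDpos) => W nW.
  apply: le_trans (B4 _) _; rewrite eY.
  rewrite rA.
  apply: ler_wpM2l; last exact: B2.
  by apply: mulr_ge0 => //; apply: ltW.
have P1b : mnorm (vnormM (invmx DM)) (1%:M - A1 *m invmx A2) <= 2 * (dm + de) * k.
  apply: (mnorm_le _ _ _ _ _ N0 nDipos) => Z nZ.
  rewrite eZ; apply: le_trans (B2 _) _.
  have := B4 (invmx A2 *m Z); rewrite mulKVmx // => h.
  rewrite rB.
  exact: ler_wpM2l.
have eR : 2 * (dm + de) * C1 * inv = 2 * (dm + de) * k by rewrite /k mulrA.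
split; [exact: uA2 | rewrite eR; exact: max_le P1a P1b |].
move=> hmu m_minus m_plus mm_pos mp_pos hm.
have F3e : forall X Y, cmod (dot2 ((A2 - A1) *m X) Y) <=
    de * ipnorm ip0 (iota (comb (phi N) X)) * ipnorm ip0 (iota (comb (phi N) Y)).
  move=> X Y; apply: le_trans (F3a X Y) _.
  rewrite hmu subrr (ipn0 hip0) mul0r addr0.
  apply: ler_wpM2r; [exact: ipn_ge0 | exact: hde].
have lowD : forall Y, m_minus * vnorm2 Y <= vnormM DM Y.
  move=> Y; have /andP [h _] := hm Y; apply: le_trans h _; rewrite -hcomb; exact: hin.
have upI : forall Y, ipnorm ip0 (iota (comb (phi N) Y)) <= m_plus * vnorm2 Y.
  by move=> Y; have /andP [_ h] := hm Y.
have lowDi : forall Z, vnormM (invmx DM) Z <= vnorm2 Z / m_minus.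
  move=> Z; apply: (dualD _ _ _ _ _ hDM); first by apply: divr_ge0 => //; apply: ltW.
  move=> Y; apply: le_trans (CS h2 Z Y) _.
  rewrite -mulrA; apply: ler_wpM2l; first exact: n20.
  by rewrite mulrC ler_pdivlMr // mulrC lowD.
have k0 : 0 <= 2 * k by apply: mulr_ge0 => //; apply: ltW.
have P2a : mnorm (@vnorm2 R N) (1%:M - invmx A2 *m A1) <= 2 * (m_plus / m_minus) * de * k.
  apply: (mnorm_le _ _ _ _ _ N0 n2pos) => W nW.
  set Y := (1%:M - invmx A2 *m A1) *m W.
  have g1 := lowD Y. have g2 := B4 Y; rewrite eY in g2.
  have g3 : vnormM (invmx DM) ((A2 - A1) *m W) <= de * ipnorm ip0 (iota (comb (phi N) W)).
    apply: (dualD _ _ _ _ _ hDM); first by apply: mulr_ge0 => //; exact: ipn_ge0.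
    move=> Y'; apply: le_trans (F3e W Y') _; apply: ler_wpM2l.
      by apply: mulr_ge0 => //; exact: ipn_ge0.
    rewrite -hcomb; exact: hin.
  have g4 := upI W.
  rewrite rC.
  rewrite ler_pdivlMr // mulrC; apply: le_trans g1 _; apply: le_trans g2 _.
  apply: ler_wpM2l => //; apply: le_trans g3 _; exact: ler_wpM2l.
have P2b : mnorm (@vnorm2 R N) (1%:M - A1 *m invmx A2) <= 2 * (m_plus / m_minus) * de * k.
  apply: (mnorm_le _ _ _ _ _ N0 n2pos) => Z nZ.
  rewrite eZ; set U := invmx A2 *m Z.
  have g1 : vnorm2 ((A2 - A1) *m U) <= de * ipnorm ip0 (iota (comb (phi N) U)) * m_plus.
    apply: (ip_dual _ _ _ _ _ h2).
      by apply: mulr_ge0; [apply: mulr_ge0 => //; exact: ipn_ge0 | apply: ltW].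
    move=> Y; apply: le_trans (F3e U Y) _; rewrite -[X in _ <= X]mulrA.
    apply: ler_wpM2l; last exact: upI.
    by apply: mulr_ge0 => //; exact: ipn_ge0.
  have g2 : ipnorm ip0 (iota (comb (phi N) U)) <= vnormM DM U by rewrite -hcomb; exact: hin.
  have g3 := B4 U; rewrite /U mulKVmx // in g3.
  have g4 := lowDi Z.
  apply: le_trans g1 _.
  rewrite rD.
  apply: ler_wpM2r; first exact: ltW.
  apply: ler_wpM2l => //; apply: le_trans g2 _; apply: le_trans g3 _.
  exact: ler_wpM2l.
have eR2 : 2 * (m_plus / m_minus) * de * C1 * inv = 2 * (m_plus / m_minus) * de * k by rewrite /k !mulrA.
rewrite eR2; exact: max_le P2a P2b.
Qed.
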